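(* Let $\epsilon>0$ and $\delta>0$ be arbitrary, and consider the open subset $B(\epsilon)\times\mathbb D_{<\delta}(T^*S^1)$ of $(\mathbb R^3\times T^*S^1,\ker(\alpha_{\mathrm{OT}}+\lambda_{\mathrm{can}}))$, a neighborhood of $\mathbb D_{\mathrm{OT}}\times S^1$. Then for every $C>0$ there is an embedding of the hypersurface $S_C=\mathbb D^2_{\le\pi}\times(-C,C)\times(-\tfrac{\delta}{2},\tfrac{\delta}{2})$ into $B(\epsilon)\times\mathbb D_{<\delta}(T^*S^1)$ such that the contact structure induces on $S_C$ the singular distribution $\ker(r\sin r\,d\vartheta-t\,ds)$, where $(r,\vartheta)$ are polar coordinates on the disk and $(s,t)$ are the coordinates on $(-C,C)\times(-\tfrac\delta2,\tfrac\delta2)$.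
   Context: $\alpha_{\mathrm{OT}}=\cos r\,dz+r\sin r\,d\vartheta$ on $\mathbb R^3$ in cylindrical coordinates $(r,\vartheta,z)$; $\mathbb D_{\mathrm{OT}}=\{r\le\pi,z=0\}$. Fix a small $\delta_0>0$ and set $B(h)=\mathbb D^2_{<\pi+\delta_0}\times(-h,h)\subset\mathbb R^3$ for $h>0$ (a cylindrical box around $\mathbb D_{\mathrm{OT}}$). On $T^*S^1$ use coordinates $(q,p)$, $q\in\mathbb R/2\pi\mathbb Z$, with $\lambda_{\mathrm{can}}=-p\,dq$, and $\mathbb D_{<\delta}(T^*S^1)=\{|p|<\delta\}$. The induced singular distribution of an embedding $\iota$ is $(D\iota)^{-1}(\xi)$ (the kernel of a vanishing form is the whole tangent space). *)

(* Defs.v *)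
From HB Require Import structures.
From mathcomp Require Import all_boot all_order all_algebra.
From mathcomp Require Import all_classical all_reals all_analysis.
Set Implicit Arguments. Unset Strict Implicit. Unset Printing Implicit Defensive.
Import Order.TTheory GRing.Theory Num.Theory.
Import numFieldNormedType.Exports.
Local Open Scope classical_set_scope.
Local Open Scope ring_scope.

Fixpoint smooth_k (R : realType) (V W : normedModType R) (k : nat)
    (U : set V) (f : V -> W) : Prop :=
  match k with
  | 0 => forall x, U x -> {for x, continuous f}
  | k'.+1 => (forall x, U x -> differentiable f x) /\
             (forall v : V, smooth_k k' U (fun x => 'd f x v))
  end.

Definition smooth_on (R : realType) (V W : normedModType R)
    (U : set V) (f : V -> W) : Prop := forall k, smooth_k k U f.

Definition c4 (R : realType) (u : 'rV[R]_4) (i : nat) : R := u ord0 (@inord 3 i).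
Definition c5 (R : realType) (w : 'rV[R]_5) (i : nat) : R := w ord0 (@inord 4 i).

(* sin r / r, extended smoothly by 1 at r = 0 *)
Definition sinc (R : realType) (r : R) : R := if r == 0 then 1 else sin r / r.

Definition rad (R : realType) (x y : R) : R := Num.sqrt (x ^+ 2 + y ^+ 2).

(* Source S_C = D^2_{<=pi} x (-C,C) x (-delta/2, delta/2) in R^4,
   with coordinates (x, y, s, t), (x,y) = (r cos th, r sin th). *)
Definition S_C (R : realType) (C delta : R) : set 'rV[R]_4 :=
  [set u | c4 u 0 ^+ 2 + c4 u 1 ^+ 2 <= pi ^+ 2 /\
           - C < c4 u 2 < C /\ - (delta / 2) < c4 u 3 < delta / 2].

(* The 1-form  r sin r d(theta) - t ds  on S_C, in Cartesian coordinates: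
   r sin r d(theta) = (sin r / r) (x dy - y dx). *)
Definition beta_S (R : realType) (u v : 'rV[R]_4) : R :=
  let x := c4 u 0 in let y := c4 u 1 in let t := c4 u 3 in
  sinc (rad x y) * (x * c4 v 1 - y * c4 v 0) - t * c4 v 2.

(* R^3 x T^*S^1 is represented through coordinates (X, Y, Z, Q, P) in R^5,
   where Q is a real lift of q in R / 2 pi Z.  The contact form
   alpha_OT + lambda_can = cos r dz + r sin r d(theta) - p dq. *)
Definition alpha (R : realType) (w v : 'rV[R]_5) : R :=
  let X := c5 w 0 in let Y := c5 w 1 in let P := c5 w 4 in
  cos (rad X Y) * c5 v 2 + sinc (rad X Y) * (X * c5 v 1 - Y * c5 v 0)
  - P * c5 v 3.

(* B(eps) x D_{<delta}(T^*S^1), B(h) = D^2_{<pi+delta0} x (-h,h) *)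
Definition target_box (R : realType) (delta0 eps delta : R) : set 'rV[R]_5 :=
  [set w | c5 w 0 ^+ 2 + c5 w 1 ^+ 2 < (pi + delta0) ^+ 2 /\
           - eps < c5 w 2 < eps /\ `|c5 w 4| < delta].

(* distance-smallness in R^3 x S^1 x R : coordinates X,Y,Z,P within d,
   and Q within d modulo 2 pi *)
Definition close5 (R : realType) (d : R) (w w' : 'rV[R]_5) : Prop :=
  `|c5 w' 0 - c5 w 0| < d /\ `|c5 w' 1 - c5 w 1| < d /\
  `|c5 w' 2 - c5 w 2| < d /\ `|c5 w' 4 - c5 w 4| < d /\
  exists k : int, `|c5 w' 3 - c5 w 3 - k%:~R * (2 * pi)| < d.

(* equality of the points of R^3 x T^*S^1 represented by w, w' *)
Definition same_pt (R : realType) (w w' : 'rV[R]_5) : Prop :=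
  c5 w' 0 = c5 w 0 /\ c5 w' 1 = c5 w 1 /\ c5 w' 2 = c5 w 2 /\
  c5 w' 4 = c5 w 4 /\ exists k : int, c5 w' 3 - c5 w 3 = k%:~R * (2 * pi).

(* F (composed with R -> R/2piZ in the Q-coordinate) is a smooth embedding
   of S into the subset T of R^3 x T^*S^1. *)
Definition smooth_embedding_into (R : realType) (S : set 'rV[R]_4)
    (T : set 'rV[R]_5) (F : 'rV[R]_4 -> 'rV[R]_5) : Prop :=
  (* smooth (in the manifold-with-boundary sense: smooth on an open nbhd) *)
  (exists U : set 'rV[R]_4, open U /\ S `<=` U /\ smooth_on U F) /\
  (forall u, S u -> T (F u)) /\
  (forall u, S u -> forall v : 'rV[R]_4, 'd F u v = 0 -> v = 0) /\
  (forall u u', S u -> S u' -> same_pt (F u) (F u') -> u = u') /\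
  (* homeomorphism onto its image (continuity of the inverse) *)
  (forall u, S u -> forall e : R, 0 < e -> exists2 d : R, 0 < d &
     forall u', S u' -> close5 d (F u) (F u') -> `|u' - u| < e).

(* the singular distribution induced by F, (DF)^{-1}(ker alpha), equals
   ker beta_S at every point of S *)
Definition induces_kernel (R : realType) (S : set 'rV[R]_4)
    (F : 'rV[R]_4 -> 'rV[R]_5) : Prop :=
  forall u, S u -> forall v : 'rV[R]_4,
    alpha (F u) ('d F u v) = 0 <-> beta_S u v = 0.

(* Main.v *)
Require Import Defs.
From mathcomp Require Import all_boot all_order all_algebra.
From mathcomp Require Import all_classical all_reals all_analysis.
From mathcomp Require Import ring lra.
Set Implicit Arguments. Unset Strict Implicit. Unset Printing Implicit Defensive.
Import Order.TTheory GRing.Theory Num.Theory.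
Import numFieldNormedType.Exports.
Local Open Scope classical_set_scope.
Local Open Scope ring_scope.

Section PS.
Variable R : realType.
Definition Ep (c : R^nat) (x : R) : R := limn (pseries c x).
Definition entire (c : R^nat) :=
  forall m K, cvgn (pseries (iter m (@pseries_diffs R) c) K).

Lemma entire_diffs c : entire c -> entire (pseries_diffs c).
Proof. by move=> H m K; rewrite -iterSr; exact: H. Qed.

Lemma Ep_derive c x : entire c ->
  is_derive x (1:R) (Ep c) (Ep (pseries_diffs c) x).
Proof.
move=> H; apply: (@pseries_snd_diffs _ _ (`|x| + 1)).
- exact: (H 0%N).
- exact: (H 1%N).
- exact: (H 2%N).
- by rewrite [ltRHS]ger0_norm ?addr_ge0// ltrDl.
Qed.

Lemma Ep_differentiable c x : entire c -> differentiable (Ep c) x.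
Proof.
move=> H; apply/derivable1_diffP; have := Ep_derive x H.
by case.
Qed.

Lemma Ep_d c x : entire c ->
  'd (Ep c) x = (fun h => h * Ep (pseries_diffs c) x) :> (R -> R).
Proof.
move=> H; rewrite deriv1E; last by have := Ep_derive x H; case.
have D := Ep_derive x H; rewrite derive1E derive_val.
by apply/funext => h.
Qed.

Definition ccos (n : nat) : R := (-1) ^+ n / (n.*2)`!%:R.

Lemma ccos_bound m n : `|iter m (@pseries_diffs R) ccos n| <= (n`!%:R)^-1.
Proof.
elim: m n => [|m IH] n /=.
  rewrite /ccos normrM normrX normrN normr1 expr1n mul1r normfV ger0_norm//.
  rewrite lef_pV2 ?posrE ?ltr0n ?fact_gt0// ler_nat.
  by apply: leq_fact; rewrite -addnn leq_addr.
rewrite /pseries_diffs normrM ger0_norm//.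
rewrite (le_trans (ler_wpM2l _ (IH n.+1)))//.
by rewrite factS natrM invfM mulrA mulfV ?mul1r// pnatr_eq0.
Qed.

Lemma entire_ccos : entire ccos.
Proof.
move=> m K; apply: normed_cvg.
apply: (@series_le_cvg _ _ (exp_coeff `|K|)).
- by move=> n /=.
- by move=> n; apply: exp_coeff_ge0.
- move=> n /=; rewrite normrM normrX mulrC ler_wpM2l ?exprn_ge0//.
  exact: ccos_bound.
- exact: is_cvg_series_exp_coeff.
Qed.

Lemma Ep_ccos r : 0 <= r -> Ep ccos r = cos (Num.sqrt r).
Proof.
move=> r0; rewrite /Ep; apply: cvg_lim => //.
have -> : pseries ccos r = series (cos_coeff' (Num.sqrt r)).
  apply/funext => n; rewrite /pseries /series /=; apply: eq_bigr => i _.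
  rewrite /cos_coeff' /ccos -mulrA mulrAC mulrA; congr (_ * _ * _).
  by rewrite -muln2 mulnC exprM sqr_sqrtr.
exact: cvg_cos_coeff'.
Qed.

Notation V4 := 'rV[R]_4.

Lemma d_coord (i : 'I_4) (x v : V4) :
  'd (fun N : V4 => N ord0 i) x v = v ord0 i.
Proof.
rewrite -deriveE; last exact: differentiable_coord.
have := @derive_mx R V4 1 4 id x v (@derivable_id _ _ x v).
rewrite derive_id => /(congr1 (fun M : V4 => M ord0 i)); rewrite mxE => ->.
by [].
Qed.

Inductive G : (V4 -> R) -> Prop :=
 | Gcst c : G (fun _ => c)
 | Gcoord i : G (fun N => N ord0 i)
 | Gadd f g : G f -> G g -> G (fun u => f u + g u)
 | Gmul f g : G f -> G g -> G (fun u => f u * g u)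
 | Gser c h : entire c -> G h -> G (fun u => Ep c (h u)).

Lemma d_add (f g : V4 -> R) x v : differentiable f x -> differentiable g x ->
  'd (fun u => f u + g u) x v = 'd f x v + 'd g x v.
Proof. by move=> df dg; rewrite -[fun u => _]/(f + g) diffD. Qed.

Lemma d_mul (f g : V4 -> R) x v : differentiable f x -> differentiable g x ->
  'd (fun u => f u * g u) x v = f x * 'd g x v + g x * 'd f x v.
Proof. by move=> df dg; rewrite -[fun u => _]/(f * g) diffM. Qed.

Lemma d_ser c (h : V4 -> R) x v : entire c -> differentiable h x ->
  'd (fun u => Ep c (h u)) x v = 'd h x v * Ep (pseries_diffs c) (h x).
Proof.
move=> ec dh; rewrite -[fun u => _]/(Ep c \o h) diff_comp //.
  by rewrite /= Ep_d.
exact: Ep_differentiable.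
Qed.

Lemma G_prop f : G f ->
  (forall x, differentiable f x) /\ (forall v, G (fun x => 'd f x v)).
Proof.
elim=> {f}.
- move=> c; split=> [x|v]; first exact: (differentiable_cst c).
  have -> : (fun x => 'd (fun _ : V4 => c) x v) = (fun _ => 0).
    by apply/funext => x; rewrite -[fun _ => c]/(cst c) diff_cst.
  exact: Gcst.
- move=> i; split=> [x|v]; first exact: differentiable_coord.
  have -> : (fun x => 'd (fun N : V4 => N ord0 i) x v) = (fun _ => v ord0 i).
    by apply/funext => x; rewrite d_coord.
  exact: Gcst.
- move=> f g _ [df Gdf] _ [dg Gdg]; split=> [x|v].
    exact: (differentiableD (df x) (dg x)).
  have -> : (fun x => 'd (fun u => f u + g u) x v) =
            (fun x => 'd f x v + 'd g x v).
    by apply/funext => x; rewrite d_add.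
  exact: Gadd.
- move=> f g Gf [df Gdf] Gg [dg Gdg]; split=> [x|v].
    exact: (differentiableM (df x) (dg x)).
  have -> : (fun x => 'd (fun u => f u * g u) x v) =
            (fun x => f x * 'd g x v + g x * 'd f x v).
    by apply/funext => x; rewrite d_mul.
  by apply: Gadd; apply: Gmul.
- move=> c h ec Gh [dh Gdh]; split=> [x|v].
    apply: (@differentiable_comp _ _ _ _ h (Ep c)) => //.
    exact: Ep_differentiable.
  have -> : (fun x => 'd (fun u => Ep c (h u)) x v) =
            (fun x => 'd h x v * Ep (pseries_diffs c) (h x)).
    by apply/funext => x; rewrite d_ser.
  by apply: Gmul => //; apply: Gser => //; exact: entire_diffs.
Qed.

Notation V5 := 'rV[R]_5.

Lemma vec_diff (F : V4 -> V5) x :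
  (forall j, differentiable (fun u => F u ord0 j) x) -> differentiable F x.
Proof.
move=> dF.
have -> : F = \sum_(j < 5) (fun u => F u ord0 j *: (delta_mx ord0 j : V5)).
  apply/funext => u; rewrite fct_sumE; exact: row_sum_delta.
apply: differentiable_sum => j; exact: differentiableZl.
Qed.

Lemma vec_d (F : V4 -> V5) x v :
  (forall j, differentiable (fun u => F u ord0 j) x) ->
  'd F x v = \row_j 'd (fun u => F u ord0 j) x v.
Proof.
move=> dF; rewrite -deriveE; last exact: vec_diff.
rewrite derive_mx; last exact/diff_derivable/vec_diff.
apply/matrixP => i j; rewrite !mxE (ord1 i) deriveE //.
Qed.

Lemma G_smooth k (F : V4 -> V5) : (forall j, G (fun u => F u ord0 j)) ->
  smooth_k k setT F.
Proof.
elim: k F => [|k IH] F GF /=.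
  move=> x _; apply: differentiable_continuous; apply: vec_diff => j.
  by have [] := G_prop (GF j).
have dF : forall x j, differentiable (fun u => F u ord0 j) x.
  by move=> x j; have [] := G_prop (GF j).
split=> [x _|v]; first exact: vec_diff.
apply: IH => j.
have -> : (fun u => 'd F u v ord0 j) = (fun u => 'd (fun w => F w ord0 j) u v).
  by apply/funext => u; rewrite vec_d // mxE.
by have [_] := G_prop (GF j).
Qed.

Lemma dG (f : V4 -> R) : G f -> forall x, differentiable f x.
Proof. by case/G_prop. Qed.

Lemma d_c4 k (x v : V4) : 'd (fun u : V4 => c4 u k) x v = c4 v k.
Proof. exact: d_coord. Qed.

Lemma d_cst (c : R) (x v : V4) : 'd (fun _ : V4 => c) x v = 0.
Proof. by rewrite -[fun _ => c]/(cst c) diff_cst. Qed.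

Definition rho (u : V4) : R := c4 u 0 * c4 u 0 + c4 u 1 * c4 u 1.

Definition comp (a : R) (j : nat) (u : V4) : R :=
  match j with
  | 0 => c4 u 0 | 1 => c4 u 1 | 2 => a * c4 u 2 | 3 => c4 u 2
  | _ => c4 u 3 + a * Ep ccos (rho u) end.

Definition Femb (a : R) (u : V4) : V5 := \row_(j < 5) comp a j u.

Lemma Gc4 k : G (fun u : V4 => c4 u k).
Proof. exact: (Gcoord (inord k)). Qed.

Lemma Grho : G rho.
Proof. by apply: Gadd; apply: Gmul; apply: Gc4. Qed.

Lemma G_comp a j : G (comp a j).
Proof.
case: j => [|[|[|[|j]]]] /=; try exact: Gc4.
  by apply: Gmul; [apply: Gcst|apply: Gc4].
apply: Gadd; first exact: Gc4.
apply: Gmul; first exact: Gcst.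
by apply: Gser; [exact: entire_ccos|exact: Grho].
Qed.

Lemma c5F a u i : (i < 5)%N -> c5 (Femb a u) i = comp a i u.
Proof. by move=> i5; rewrite /c5 /Femb mxE inordK. Qed.

Lemma dF_entry a u v i : (i < 5)%N ->
  c5 ('d (Femb a) u v) i = 'd (comp a i) u v.
Proof.
move=> i5; rewrite vec_d; last first.
  move=> j.
  have -> : (fun u0 => Femb a u0 ord0 j) = comp a j.
    by apply/funext => w; rewrite /Femb mxE.
  exact: dG (G_comp a j) u.
rewrite /c5 mxE.
have -> : (fun u0 => Femb a u0 ord0 (inord i)) = comp a i.
  by apply/funext => w; rewrite /Femb mxE inordK.
by [].
Qed.

Lemma dcomp2 a (u v : V4) : 'd (comp a 2) u v = a * c4 v 2.
Proof.
rewrite [comp a 2]/comp d_mul ?d_c4 ?d_cst ?mulr0 ?addr0 //.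
exact: dG (Gc4 _) u.
Qed.

Lemma dcomp4 a (u v : V4) : c4 v 0 = 0 -> c4 v 1 = 0 ->
  'd (comp a 4) u v = c4 v 3.
Proof.
move=> v0 v1.
have dr : differentiable rho u by exact: dG Grho u.
rewrite [comp a 4]/comp d_add; last 2 first.
- exact: dG (Gc4 _) u.
- by apply: dG; apply: Gmul; [apply: Gcst|apply: Gser; [exact: entire_ccos|exact: Grho]].
rewrite d_c4 d_mul; last 2 first.
- exact: dG (Gcst _) u.
- by apply: dG; apply: Gser; [exact: entire_ccos|exact: Grho].
rewrite d_cst d_ser //; last exact: entire_ccos.
rewrite /rho d_add; last 2 first.
- by apply: dG; apply: Gmul; apply: Gc4.
- by apply: dG; apply: Gmul; apply: Gc4.
rewrite !d_mul; try exact: dG (Gc4 _) u.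
rewrite !d_c4 v0 v1; ring.
Qed.

Lemma norm4_lt (w : V4) e : 0 < e ->
  (forall k, (k < 4)%N -> `|c4 w k| < e) -> `|w| < e.
Proof.
move=> e0 H; rewrite [ltLHS]/Num.Def.normr /= mx_normrE.
apply: bigmax_lt => // -[i j] _ /=; rewrite (ord1 i).
by have := H j (ltn_ord j); rewrite /c4 inord_val.
Qed.

Lemma c4B (w w' : V4) k : c4 (w' - w) k = c4 w' k - c4 w k.
Proof. by rewrite /c4 !mxE. Qed.

Lemma row_eq4 (w w' : V4) : (forall k, (k < 4)%N -> c4 w k = c4 w' k) -> w = w'.
Proof.
move=> H; apply/rowP => j; have := H j (ltn_ord j).
by rewrite /c4 inord_val.
Qed.

Lemma g_cont (u : V4) e : 0 < e -> exists2 eta, 0 < eta &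
  forall w, `|u - w| < eta -> `|Ep ccos (rho u) - Ep ccos (rho w)| < e.
Proof.
move=> e0.
have := differentiable_continuous (dG (Gser entire_ccos Grho) u).
move=> /cvgrPdist_lt /(_ e e0) /nbhs_ballP [eta eta0 H].
exists eta => // w uw; apply: H.
by rewrite -ball_normE /ball_ /=.
Qed.

Lemma dcomp0 a (u v : V4) : 'd (comp a 0) u v = c4 v 0.
Proof. exact: d_c4. Qed.
Lemma dcomp1 a (u v : V4) : 'd (comp a 1) u v = c4 v 1.
Proof. exact: d_c4. Qed.
Lemma dcomp3 a (u v : V4) : 'd (comp a 3) u v = c4 v 2.
Proof. exact: d_c4. Qed.
End PS.

Theorem mainTheorem3 (R : realType) (delta0 eps delta : R) :
  0 < delta0 -> 0 < eps -> 0 < delta ->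
  forall C : R, 0 < C ->
  exists F : 'rV[R]_4 -> 'rV[R]_5,
    smooth_embedding_into (S_C C delta) (target_box delta0 eps delta) F /\
    induces_kernel (S_C C delta) F.
Proof.
move=> d00 e0 d0 C C0.
pose a := Num.min (eps / (2 * C)) (delta / 4).
have a0 : 0 < a by rewrite lt_min !divr_gt0 ?mulr_gt0.
have aC : a * C < eps.
  have : a <= eps / (2 * C) by rewrite ge_min lexx.
  rewrite ler_pdivlMr ?mulr_gt0// => h; nra.
have ad : a <= delta / 4 by rewrite ge_min lexx orbT.
have Ecos (u : 'rV[R]_4) : Ep (ccos R) (rho u) = cos (Defs.rad (c4 u 0) (c4 u 1)).
  by rewrite /rho -!expr2 Ep_ccos ?addr_ge0 ?sqr_ge0.
have Ebound (u : 'rV[R]_4) : `|Ep (ccos R) (rho u)| <= 1 by rewrite Ecos cos_max.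
exists (Femb a); split; [split|].
- exists setT; split; first exact: openT.
  split=> // k; apply: G_smooth => j.
  have -> : (fun u => Femb a u ord0 j) = comp a j.
    by apply/funext => w; rewrite /Femb mxE.
  exact: G_comp.
split.
  move=> u [Hd [/andP[Hs1 Hs2] /andP[Ht1 Ht2]]]; rewrite /target_box /=.
  rewrite !c5F //=; split; first by have := pi_gt0 R; nra.
  split; first by apply/andP; split; nra.
  have := Ebound u; have : `|c4 u 3| < delta / 2 by rewrite ltr_norml Ht1.
  move=> h1 h2; rewrite (le_lt_trans (ler_normD _ _)) // normrM gtr0_norm //.
  nra.
split.
  move=> u _ v H.
  have E i : (i < 5)%N -> 'd (comp a i) u v = 0.
    by move=> i5; rewrite -dF_entry // H /c5 mxE.
  have v0 : c4 v 0 = 0 by rewrite -(dcomp0 a u) E.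
  have v1 : c4 v 1 = 0 by rewrite -(dcomp1 a u) E.
  have v2 : c4 v 2 = 0 by rewrite -(dcomp3 a u) E.
  have v3 : c4 v 3 = 0 by rewrite -(dcomp4 a u v0 v1) E.
  apply: row_eq4 => k k4; rewrite [c4 0 k]/c4 mxE.
  by case: k k4 => [|[|[|[|k]]]].
split.
  move=> u u' _ _ [h0 [h1 [h2 [h4 _]]]].
  rewrite !c5F //= in h0 h1 h2 h4.
  have h3 : c4 u' 2 = c4 u 2 by apply: (mulfI (lt0r_neq0 a0)).
  have hr : rho u' = rho u by rewrite /rho h0 h1.
  rewrite hr in h4; have h5 : c4 u' 3 = c4 u 3 by apply: (addIr _ h4).
  apply: row_eq4 => k k4.
  by case: k k4 => [|[|[|[|k]]]].
- move=> u Su e e0'.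
  have e2a : 0 < e / (2 * a) by rewrite divr_gt0 ?mulr_gt0.
  have [eta eta0 Heta] := g_cont u e2a.
  exists (Num.min (Num.min (e / 2) (a * e)) eta).
    by rewrite !lt_min eta0 divr_gt0 ?mulr_gt0.
  move=> u' Su' [c0 [c1 [c2 [c4' _]]]].
  rewrite !c5F //= in c0 c1 c2 c4'.
  rewrite !lt_min in c0 c1 c2 c4'.
  case/andP: c0 => /andP[c0a c0b] c0c.
  case/andP: c1 => /andP[c1a c1b] c1c.
  case/andP: c2 => /andP[c2a c2b] c2c.
  case/andP: c4' => /andP[c4a c4b] c4c.
  pose w : 'rV[R]_4 := \row_(j < 4) (if (j < 2)%N then u' ord0 j else u ord0 j).
  have cw k : (k < 4)%N -> c4 w k = if (k < 2)%N then c4 u' k else c4 u k.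
    by move=> k4; rewrite {1}/c4 mxE inordK.
  have Hw : `|u - w| < eta.
    apply: norm4_lt => // k k4; rewrite c4B cw //.
    case: k k4 => [|[|[|[|k]]]] //= _; rewrite ?subrr ?normr0 //.
      by rewrite distrC.
    by rewrite distrC.
  have gw : rho w = rho u' by rewrite /rho !cw.
  have Hg := Heta w Hw; rewrite gw in Hg.
  apply: norm4_lt => // k k4; rewrite c4B.
  case: k k4 => [|[|[|[|k]]]] // _.
  + by move: c0a; lra.
  + by move: c1a; lra.
  + by move: c2b; rewrite -mulrBr normrM gtr0_norm // ltr_pM2l.
  + have -> : c4 u' 3 - c4 u 3 =
        (c4 u' 3 + a * Ep (ccos R) (rho u') - (c4 u 3 + a * Ep (ccos R) (rho u)))
        + a * (Ep (ccos R) (rho u) - Ep (ccos R) (rho u')) by ring.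
    rewrite (le_lt_trans (ler_normD _ _)) // normrM gtr0_norm //.
    have : a * `|Ep (ccos R) (rho u) - Ep (ccos R) (rho u')| < a * (e / (2 * a)).
      by rewrite ltr_pM2l.
    have -> : a * (e / (2 * a)) = e / 2 by field; rewrite lt0r_neq0.
    move=> h; lra.
- move=> u _ v.
  suff -> : alpha (Femb a u) ('d (Femb a) u v) = beta_S u v by [].
  rewrite /alpha /beta_S !c5F // !dF_entry //.
  rewrite dcomp0 dcomp1 dcomp2 dcomp3 /= -Ecos /Defs.rad; ring.
Qed.
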